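(* There exist absolute constants $c>0$ and $\alpha_0\in(0,1)$ such that for every $\alpha\in(0,\alpha_0]$ there exist a distribution $\mathcal D$ over $\mathcal X\times\{A,B\}\times\{0,1\}$, a hypothesis class $\mathcal H$ with an optimal Equal-Opportunity-constrained classifier $h^*\in\mathcal H$ on $\mathcal D$ (i.e. $h^*$ minimizes $\Pr_{\mathcal D}[h(x,z)\ne y]$ among $h\in\mathcal H$ satisfying Equal Opportunity on $\mathcal D$), and a malicious adversary of power $\alpha$, i.e. a distribution $\mathcal Q$ yielding $\widetilde{\mathcal D}=(1-\alpha)\mathcal D+\alpha\mathcal Q$, such that every hypothesis $\hat h$ (possibly randomized and not in $\mathcal H$, i.e. returned by an improper learner) satisfying Equal Opportunity on $\widetilde{\mathcal D}$ has $$\Big|\mathbb E_{\mathcal D}[\mathbf 1(\hat h(x,z)\ne y)]-\mathbb E_{\mathcal D}[\mathbf 1(h^*(x,z)\ne y)]\Big|\ge c\sqrt\alpha.$$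
   Context: Examples are triples (features $x$, group $z\in\{A,B\}$, label $y\in\{0,1\}$); hypotheses may depend on the group. Equal Opportunity on a distribution: $\Pr[h(x,z)=1\mid y=1,z=A]=\Pr[h(x,z)=1\mid y=1,z=B]$ (probabilities also over the hypothesis's randomness). *)

(* Defs.v *)
From HB Require Import structures.
From mathcomp Require Import all_boot all_order all_algebra.
From mathcomp Require Import reals.
Set Implicit Arguments. Unset Strict Implicit. Unset Printing Implicit Defensive.
Import Order.TTheory GRing.Theory Num.Theory.
Local Open Scope ring_scope.

(* Group z : bool, with  true = A  and  false = B.  Label y : bool (true = 1). *)
Definition grpA : bool := true.
Definition grpB : bool := false.

Definition is_distr (R : realType) (X : finType) (P : {ffun X * bool * bool -> R}) : Prop :=
  (forall e, 0 <= P e) /\ \sum_e P e = 1.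

(* A (possibly randomized) hypothesis: h (x,z) = Pr[h(x,z) = 1] in [0,1]. *)
Definition is_rhyp (R : realType) (X : finType) (h : {ffun X * bool -> R}) : Prop :=
  forall u, 0 <= h u <= 1.

Definition det_hyp (R : realType) (X : finType) (g : {ffun X * bool -> bool})
  : {ffun X * bool -> R} := [ffun u => (g u)%:R].

(* Pr_P[h(x,z) = 1 | y = 1, z = a]  (conditional probability; 0 if the
   conditioning event has probability 0, by the convention x/0 = 0). *)
Definition tpr (R : realType) (X : finType) (P : {ffun X * bool * bool -> R})
  (h : {ffun X * bool -> R}) (a : bool) : R :=
  (\sum_(x : X) P (x, a, true) * h (x, a)) / (\sum_(x : X) P (x, a, true)).

Definition equal_opp (R : realType) (X : finType) (P : {ffun X * bool * bool -> R})
  (h : {ffun X * bool -> R}) : Prop :=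
  tpr P h grpA = tpr P h grpB.

Definition err (R : realType) (X : finType) (P : {ffun X * bool * bool -> R})
  (h : {ffun X * bool -> R}) : R :=
  \sum_(e : X * bool * bool)
     P e * (if e.2 then 1 - h (e.1.1, e.1.2) else h (e.1.1, e.1.2)).

Definition mixture (R : realType) (X : finType) (alpha : R)
  (D Q : {ffun X * bool * bool -> R}) : {ffun X * bool * bool -> R} :=
  [ffun e => (1 - alpha) * D e + alpha * Q e].

Definition optimal_EO (R : realType) (X : finType) (D : {ffun X * bool * bool -> R})
  (H : {set {ffun X * bool -> bool}}) (hstar : {ffun X * bool -> bool}) : Prop :=
  hstar \in H /\ equal_opp D (det_hyp R hstar) /\
  forall g, g \in H -> equal_opp D (det_hyp R g) ->
    err D (det_hyp R hstar) <= err D (det_hyp R g).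

(* Main.v *)
Require Import Defs.
From HB Require Import structures.
From mathcomp Require Import all_boot all_order all_algebra.
From mathcomp Require Import reals.
From mathcomp Require Import ring lra.
Import Order.TTheory GRing.Theory Num.Theory.
Local Open Scope ring_scope.

Lemma sum8 (R : realType) (f : bool * bool * bool -> R) :
  \sum_e f e = \sum_x \sum_z \sum_y f (x, z, y).
Proof.
rewrite pair_big /= pair_big /=.
by apply: eq_bigr => [[[x z] y]].
Qed.

Lemma sum8E (R : realType) (f : bool * bool * bool -> R) :
  \sum_e f e = f (true,true,true) + f (true,true,false) + f (true,false,true)
   + f (true,false,false) + f (false,true,true) + f (false,true,false)
   + f (false,false,true) + f (false,false,false).
Proof. rewrite sum8 !big_bool /=; ring. Qed.

Theorem mainTheorem8 (R : realType) :
  exists (c alpha0 : R), 0 < c /\ 0 < alpha0 < 1 /\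
  forall alpha : R, 0 < alpha <= alpha0 ->
  exists (X : finType) (D : {ffun X * bool * bool -> R})
         (H : {set {ffun X * bool -> bool}}) (hstar : {ffun X * bool -> bool})
         (Q : {ffun X * bool * bool -> R}),
    is_distr D /\ optimal_EO D H hstar /\ is_distr Q /\
    forall hhat : {ffun X * bool -> R}, is_rhyp hhat ->
      equal_opp (mixture alpha D Q) hhat ->
      c * Num.sqrt alpha <= `| err D hhat - err D (det_hyp R hstar) |.
Proof.
exists (1/4), (1/16); split; first lra.
split; first lra.
move=> alpha /andP[a0 a1].
set s := Num.sqrt alpha.
have s0 : 0 < s by rewrite sqrtr_gt0.
have ss : s ^+ 2 = alpha by rewrite sqr_sqrtr // ltW.
have s1 : s <= 1/4 by nra.
pose D : {ffun bool * bool * bool -> R} := [ffun e =>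
  match e with
  | (false, true, true) => 1/2
  | (false, false, true) => s
  | (true, false, false) => 1/2 - s
  | _ => 0 end].
pose hs : {ffun bool * bool -> bool} := [ffun u => ~~ u.1].
pose Q : {ffun bool * bool * bool -> R} := [ffun e =>
  if e == (true, false, true) then 1 else 0].
have errhs : err D (det_hyp R hs) = 0.
  by rewrite /err sum8E /D /Q /hs /det_hyp !ffunE /=; ring.
exists bool, D, [set hs], hs, Q.
split.
  split; first by case=> [[[] []] []]; rewrite ffunE //=; lra.
  rewrite sum8E /D /Q /hs /det_hyp !ffunE /=; lra.
split.
  split; first by rewrite in_set1.
  have eo : equal_opp D (det_hyp R hs).
    rewrite /equal_opp /tpr /D /Q /hs /det_hyp /mixture !big_bool !ffunE /=.
    rewrite !mul0r !add0r !mulr1 !divff //; apply/eqP; lra.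
  split => // g; rewrite in_set1 => /eqP -> _; lra.
split.
  split; first by move=> e; rewrite ffunE; case: ifP => _; lra.
  rewrite sum8E /D /Q /hs /det_hyp !ffunE /=; lra.
move=> h hh eo.
move: eo; rewrite /equal_opp /tpr /D /Q /mixture /grpA /grpB !big_bool !ffunE /= => eo.
rewrite errhs subr0 /err sum8E /D !ffunE /=.
have /andP[a0' a1'] := hh (false, true).
have /andP[b0 b1] := hh (false, false).
have /andP[c0 c1] := hh (true, false).
set a := h (false, true) in eo a0' a1' *.
set b := h (false, false) in eo b0 b1 *.
set c := h (true, false) in eo c0 c1 *.
set t := h (true, true) in eo *.
move/eqP: eo; rewrite eqr_div; [move/eqP=> E | apply/eqP; nra | apply/eqP; nra].
have key : (a * (alpha + (1 - alpha) * s) - ((1 - alpha) * s * b + alpha * c)) * ((1 - alpha) / 2) = 0.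
  lra.
have key2 : a * (alpha + (1 - alpha) * s) = (1 - alpha) * s * b + alpha * c.
  move/eqP: key; rewrite mulf_eq0 => /orP[/eqP|/eqP]; [|lra].
  by move/eqP; rewrite subr_eq0 => /eqP.
have ps : 0 <= (1 - alpha) * s * (1 - b).
  apply: mulr_ge0; [apply: mulr_ge0|]; lra.
have h1 : alpha * (1 - c) <= (1 - a) * (alpha + (1 - alpha) * s) by lra.
have h2 : alpha + (1 - alpha) * s <= 2 * s by nra.
have h3 : s * (s * (1 - c)) <= s * (2 * (1 - a)) by nra.
have h4 : s * (1 - c) <= 2 * (1 - a) by rewrite -(ler_pM2l s0).
have h5 : 0 <= (1 / 4 - s / 4) * c by apply: mulr_ge0; lra.
rewrite ger0_norm; nra.
Qed.
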